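(* Let $A\in\mathcal A_n$ with Kupisch series $[c_0,\dots,c_{n-1}]$. Then the directed graph $\tau(A)$ is a tree rooted at the vertex $n$.
   Context: $K$ is an algebraically closed field. $\mathcal A_n$ is the set of ordered products $A=A_1\times\cdots\times A_k$ of connected linear Nakayama algebras with $n$ simple modules in total (the order of factors matters). The Kupisch series of $A$ is the concatenation of the Kupisch series of $A_1,\dots,A_k$, where a connected linear Nakayama algebra with $m$ simple modules has Kupisch series $[c_0,\dots,c_{m-1}]$, $c_i=\dim e_iA$, characterized by $c_{i+1}+1\ge c_i\ge2$ for $0\le i<m-1$ and $c_{m-1}=1$. $\tau(A)$ is the directed graph with vertex set $\{0,\dots,n\}$ and an edge $i+c_i\to i$ for each $0\le i<n$. *)

(* Defs.v *)
From mathcomp Require Import all_boot.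
Set Implicit Arguments. Unset Strict Implicit. Unset Printing Implicit Defensive.

(* Kupisch series [c_0,...,c_{m-1}] of a connected linear Nakayama algebra
   with m >= 1 simple modules: c_{i+1}+1 >= c_i >= 2 for i < m-1, c_{m-1} = 1. *)
Definition kupisch_conn (s : seq nat) : Prop :=
  0 < size s /\ nth 0 s (size s).-1 = 1 /\
  (forall i, i < (size s).-1 ->
     nth 0 s i.+1 + 1 >= nth 0 s i /\ nth 0 s i >= 2).

(* An element of A_n: an ordered list of connected linear Nakayama algebras
   (each represented by its Kupisch series) with n simple modules in total. *)
Definition in_A (n : nat) (A : seq (seq nat)) : Prop :=
  (forall s, s \in A -> kupisch_conn s) /\ sumn (map size A) = n.

Definition kupisch (A : seq (seq nat)) : seq nat := flatten A.

(* Directed multigraphs: vertices 0..N-1, edges given as a list of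
   (source, target) pairs; edges are identified by their index in the list. *)
Definition tau_edges (c : seq nat) : seq (nat * nat) :=
  [seq (i + nth 0 c i, i) | i <- iota 0 (size c)].

Fixpoint is_walk (E : seq (nat * nat)) (u : nat) (ks : seq nat) (v : nat) : bool :=
  match ks with
  | [::] => u == v
  | k :: ks' => [&& k < size E, (nth (0,0) E k).1 == u &
                   is_walk E (nth (0,0) E k).2 ks' v]
  end.

Definition rooted_tree (N : nat) (E : seq (nat * nat)) (r : nat) : Prop :=
  r < N /\ (forall e, e \in E -> (e.1 < N) && (e.2 < N)) /\
  (forall v, v < N -> exists! ks : seq nat, is_walk E r ks v).

(* Main.v *)
Require Import Defs.
From mathcomp Require Import all_boot.
From mathcomp Require Import zify.

Lemma is_walk_rcons E u ks k v :
  is_walk E u (rcons ks k) v =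
  is_walk E u ks (nth (0,0) E k).1 && ((k < size E) && ((nth (0,0) E k).2 == v)).
Proof.
elim: ks u => [|k' ks IH] u /=.
  by rewrite [u == _]eq_sym andbCA.
by rewrite IH !andbA.
Qed.

Lemma block_bound s : kupisch_conn s ->
  forall i, i < size s -> 0 < nth 0 s i /\ i + nth 0 s i <= size s.
Proof.
case=> Hsz [Hlast Hstep].
have key : forall d i, i + d = (size s).-1 -> i + nth 0 s i <= size s.
  elim=> [|d IH] i Hi.
    rewrite addn0 in Hi; rewrite Hi Hlast; lia.
  have Hlt : i < (size s).-1 by lia.
  have [H1 _] := Hstep i Hlt.
  have := IH i.+1 ltac:(lia). lia.
move=> i Hi; split; last by apply: (key ((size s).-1 - i)); lia.
case: (ltnP i (size s).-1) => H.
  have [_ H2] := Hstep i H; lia.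
have -> : i = (size s).-1 by lia.
by rewrite Hlast.
Qed.

Lemma flat_bound (A : seq (seq nat)) : (forall s, s \in A -> kupisch_conn s) ->
  forall i, i < size (flatten A) ->
  0 < nth 0 (flatten A) i /\ i + nth 0 (flatten A) i <= size (flatten A).
Proof.
elim: A => [|s A IH] HA i //=.
rewrite size_cat nth_cat => Hi.
have Hs := @block_bound s (HA s (mem_head _ _)).
case: (ltnP i (size s)) => H.
  have [? ?] := Hs i H; split=> //; lia.
have Hi' : i - size s < size (flatten A) by lia.
have IH' := IH (fun t Ht => HA t (@mem_behead _ (s :: A) t Ht)) (i - size s) Hi'.
case: IH' => ? ?; split => //; lia.
Qed.

Theorem lemma3p1 (n : nat) (A : seq (seq nat)) :
  in_A n A -> rooted_tree n.+1 (tau_edges (kupisch A)) n.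
Proof.
case=> HA Hn.
set c := kupisch A.
have hsz : size c = n by rewrite /c /kupisch size_flatten -Hn.
have hc : forall i, i < n -> 0 < nth 0 c i /\ i + nth 0 c i <= n.
  by move=> i Hi; rewrite -hsz; apply: flat_bound => //; rewrite -/(kupisch A) -/c hsz.
set E := tau_edges c.
have hE : size E = n by rewrite size_map size_iota.
have hnth : forall k, k < n -> nth (0,0) E k = (k + nth 0 c k, k).
  by move=> k Hk; rewrite (nth_map 0) ?size_iota ?hsz // nth_iota ?hsz.
split=> //; split.
  move=> e /mapP [i]; rewrite mem_iota hsz add0n => Hi -> /=.
  have [? ?] := hc i Hi; apply/andP; split; lia.
move=> v Hv.
have ex : forall d v, v <= n -> n - v <= d -> exists ks, is_walk E n ks v.
  elim=> [|d IH] w Hw Hd.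
    by exists [::]; rewrite /=; apply/eqP; lia.
  case: (ltnP w n) => Hwn; last by exists [::]; apply/eqP; lia.
  have [H1 H2] := hc w Hwn.
  have [ks Hks] := IH (w + nth 0 c w) H2 ltac:(lia).
  exists (rcons ks w); rewrite is_walk_rcons hnth // hE Hwn eqxx /=.
  by rewrite Hks.
have uniq : forall ks1 ks2 v, is_walk E n ks1 v -> is_walk E n ks2 v -> ks1 = ks2.
  elim/last_ind=> [|ks1 k1 IH] ks2 w; case/lastP: ks2 => [|ks2 k2] //=.
  - move=> /eqP <-; rewrite is_walk_rcons hE => /andP [_ /andP [Hk /eqP]].
    by rewrite hnth //= => E'; lia.
  - rewrite is_walk_rcons hE => /andP [_ /andP [Hk /eqP]] + /eqP Hw.
    by rewrite hnth //= => E'; lia.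
  - rewrite !is_walk_rcons hE => /andP [W1 /andP [Hk1 /eqP]].
    rewrite hnth //= => E1 /andP [W2 /andP [Hk2 /eqP]].
    rewrite hnth //= => E2.
    subst.
    by rewrite (IH _ _ W1 W2).
have [ks Hks] := ex n.+1 v ltac:(lia) ltac:(lia).
exists ks; split=> // ks' Hks'; exact: uniq Hks Hks'.
Qed.
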